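(* Let $X\subset\mathbb{R}^d$ be a finite point cloud in general position, let $1\le k\le d-1$, and let $\sigma\in\mathsf{DEL}^k$. If $\sigma\prec\max\partial\tau$ for every $\tau\in\mathrm{MSA}^{k+1}$ with $\sigma\subset\tau$, then $\sigma\in\mathrm{USC}^k$.
   Context: General position: no $d+1$ points on a common affine hyperplane, no $d+2$ on a common $(d-1)$-sphere; $\mathsf{DEL}$ is the Delaunay complex of $X$, $\mathsf{DEL}^k$ its $k$-simplices, $\delta$ the Euclidean diameter. Total orders $\prec$ on $\mathsf{DEL}^k$: for edges, $\sigma\prec\sigma'$ iff $\delta(\sigma)<\delta(\sigma')$ or ($\delta(\sigma)=\delta(\sigma')$ and $\sigma$ lexicographically precedes $\sigma'$); for $(k+1)$-simplices, $\sigma\prec\sigma'$ iff $\max\partial\sigma\prec\max\partial\sigma'$ or ($\max\partial\sigma=\max\partial\sigma'$ and $\sigma$ lexicographically precedes $\sigma'$), where $\partial$ denotes the set of facets and $\max$ is w.r.t. $\prec$. A set $S\subseteq\mathsf{DEL}^m$ is an $m$-spanning acycle if $L=\mathsf{DEL}^{(m-1)}\cup S$ satisfies $\tilde\beta_m(L)=\tilde\beta_{m-1}(L)=0$; $\mathrm{MSA}^m$ is the minimum $m$-spanning acycle w.r.t. $\prec$ (the unique minimizer of $\sum_{\sigma\in S}w(\sigma)$ for any weight $w$ strictly increasing along $\prec$). $\mathrm{USC}^k=\{\sigma\in\mathsf{DEL}^k:\sigma\prec\max\partial\tau\text{ for every }(k+1)\text{-simplex }\tau\in\mathsf{DEL}\text{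 with }\sigma\subset\tau\}$. *)

(* Defs.v *)
From mathcomp Require Import all_boot all_order all_algebra.
From mathcomp Require Import boolp reals.
Set Implicit Arguments. Unset Strict Implicit. Unset Printing Implicit Defensive.
Import Order.TTheory GRing.Theory Num.Theory.
Local Open Scope ring_scope.

Section Geometry.
Variables (R : realType) (d n : nat) (X : 'I_n -> 'rV[R]_d).

Definition dotp (u v : 'rV[R]_d) : R := \sum_(i < d) u 0 i * v 0 i.
Definition sqdist (u v : 'rV[R]_d) : R := \sum_(i < d) (u 0 i - v 0 i) ^+ 2.
Definition edist (u v : 'rV[R]_d) : R := Num.sqrt (sqdist u v).

Definition general_position : Prop :=
  (forall A : {set 'I_n}, #|A| = d.+1 ->
     ~ exists (a : 'rV[R]_d) (b : R), a != 0 /\ forall i, i \in A -> dotp a (X i) = b)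
  /\
  (forall A : {set 'I_n}, #|A| = d.+2 ->
     ~ exists (c : 'rV[R]_d) (r : R), 0 < r /\ forall i, i \in A -> edist (X i) c = r).

(* Delaunay complex = nerve of the Voronoi cells: sigma is Delaunay iff some
   point c is equidistant from the points of sigma and at least as close to
   them as to any point of X.  (The empty simplex belongs to DEL.) *)
Definition DEL (s : {set 'I_n}) : bool :=
  `[< exists c : 'rV[R]_d, exists r : R,
        (forall i, i \in s -> edist (X i) c = r) /\ (forall j, r <= edist (X j) c) >].

Definition DELk (k : nat) : {set {set 'I_n}} := [set s | DEL s & #|s| == k.+1]%N.

Definition diam (s : {set 'I_n}) : R :=
  \big[Num.max/0]_(i in s) \big[Num.max/0]_(j in s) edist (X i) (X j).

Fixpoint seq_lexlt (a b : seq nat) : bool :=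
  match a, b with
  | x :: a', y :: b' => (x < y)%N || ((x == y) && seq_lexlt a' b')
  | [::], _ :: _ => true
  | _, _ => false
  end.
Definition vseq (s : {set 'I_n}) : seq nat := sort leq [seq val i | i <- enum s].
Definition lexlt (s t : {set 'I_n}) : bool := seq_lexlt (vseq s) (vseq t).

Definition is_facet (f s : {set 'I_n}) : bool := (f \subset s) && (#|f| == #|s|.-1)%N.

Definition max_facet (lt : rel {set 'I_n}) (s : {set 'I_n}) : {set 'I_n} :=
  odflt set0 [pick f | is_facet f s &&
                 [forall g, (is_facet g s && (g != f)) ==> lt g f]].

Fixpoint prec (k : nat) (s t : {set 'I_n}) : bool :=
  match k with
  | 0 => false
  | k'.+1 =>
    if k' == 0%N then
      (diam s < diam t) || ((diam s == diam t) && lexlt s t)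
    else
      let ms := max_facet (prec k') s in
      let mt := max_facet (prec k') t in
      prec k' ms mt || ((ms == mt) && lexlt s t)
  end.

Definition max_bd (k : nat) (t : {set 'I_n}) : {set 'I_n} := max_facet (prec k) t.

Definition USC (k : nat) : {set {set 'I_n}} :=
  [set s in DELk k | [forall t in DELk k.+1, (s \subset t) ==> prec k s (max_bd k t)]].

End Geometry.

Section Homology.
Variables (F : fieldType) (n : nat).
Local Notation T := {set 'I_n}.
Local Notation N := #|{: T}|.

(* boundary matrix of the p-th boundary map of the (augmented) chain complex
   of the complex K (given as a predicate), in row-vector convention:
   rows = p-simplices, columns = (p-1)-simplices, vertices ordered by index *)
Definition bnd (K : pred T) (p : nat) : 'M[F]_N :=
  \matrix_(i < N, j < N)
    let t := enum_val i in let s := enum_val j in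
    if [&& K t, K s, #|t| == p.+1, s \subset t & #|t| == #|s|.+1]%N
    then (-1) ^+ #|[set u in t | [exists v in t :\: s, (u < v)%N]]|
    else 0.

(* reduced Betti number  dim Z_p - dim B_p  *)
Definition rbetti (K : pred T) (p : nat) : nat :=
  (#|[set t | K t & #|t| == p.+1]| - \rank (bnd K p) - \rank (bnd K p.+1))%N.
End Homology.

Section MSA.
Variables (R : realType) (F : fieldType) (d n : nat) (X : 'I_n -> 'rV[R]_d).

(* L = DEL^{(m-1)} u S *)
Definition skel_plus (m : nat) (S : {set {set 'I_n}}) : pred {set 'I_n} :=
  fun t => (DEL X t && (#|t| <= m)%N) || (t \in S).

Definition spanning_acycle (m : nat) (S : {set {set 'I_n}}) : Prop :=
  S \subset DELk X m /\
  rbetti F (skel_plus m S) m = 0%N /\ rbetti F (skel_plus m S) m.-1 = 0%N.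

Definition strictly_increasing (m : nat) (w : {set 'I_n} -> R) : Prop :=
  forall s t, s \in DELk X m -> t \in DELk X m -> prec X m s t -> w s < w t.

Definition is_MSA (m : nat) (S : {set {set 'I_n}}) : Prop :=
  spanning_acycle m S /\
  forall w, strictly_increasing m w ->
    forall S', spanning_acycle m S' -> S' != S ->
      \sum_(t in S) w t < \sum_(t in S') w t.
End MSA.

(* Main.v *)
Require Import Defs.
From mathcomp Require Import all_boot all_order all_algebra.
From mathcomp Require Import reals.
Import Order.TTheory GRing.Theory Num.Theory.
Local Open Scope ring_scope.

Module Aux.
Set Implicit Arguments. Unset Strict Implicit. Unset Printing Implicit Defensive.

Lemma seq_lexlt_irr (a : seq nat) : seq_lexlt a a = false.
Proof. by elim: a => //= x a ->; rewrite ltnn eqxx. Qed.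

Lemma seq_lexlt_trans (a b c : seq nat) :
  seq_lexlt a b -> seq_lexlt b c -> seq_lexlt a c.
Proof.
elim: a b c => [|x a IH] [|y b] [|z c] //=.
move=> /orP[xy|/andP[/eqP-> ab]] /orP[yz|/andP[/eqP<- bc]].
- by rewrite (ltn_trans xy yz).
- by rewrite xy.
- by rewrite yz.
- by rewrite eqxx (IH _ _ ab bc) orbT.
Qed.

Lemma seq_lexlt_total (a b : seq nat) :
  [|| seq_lexlt a b, seq_lexlt b a | a == b].
Proof.
elim: a b => [|x a IH] [|y b] //=.
case: (ltngtP x y) => //= xy; subst y.
case/or3P: (IH b) => [->|->|/eqP->]; rewrite ?orbT ?eqxx ?orbT //.
Qed.

Lemma vseq_inj n : injective (@vseq n).
Proof.
move=> s t E; apply/setP => i.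
have H (u : {set 'I_n}) : (i \in u) = (val i \in vseq u).
  rewrite /vseq mem_sort; apply/idP/idP.
    move=> iu; apply: map_f. rewrite mem_enum. exact iu.
  move/mapP=> [j]. rewrite mem_enum => ju /val_inj eij. rewrite eij. exact ju.
by rewrite (H s) (H t) E.
Qed.

Lemma lexlt_irr n (s : {set 'I_n}) : lexlt s s = false.
Proof. exact: seq_lexlt_irr. Qed.

Lemma lexlt_trans n (s t u : {set 'I_n}) : lexlt s t -> lexlt t u -> lexlt s u.
Proof. exact: seq_lexlt_trans. Qed.

Lemma lexlt_total n (s t : {set 'I_n}) : [|| lexlt s t, lexlt t s | s == t].
Proof.
rewrite /lexlt; case/or3P: (seq_lexlt_total (vseq s) (vseq t)) => [->|->|/eqP/vseq_inj->] //.
  by rewrite orbT.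
by rewrite eqxx !orbT.
Qed.

Section Prec.
Variables (R : realType) (d n : nat) (X : 'I_n -> 'rV[R]_d).

Lemma prec_irr' k s : prec X k s s = false.
Proof.
elim: k s => [|k IH] s //=; case: ifP => _.
  by rewrite ltxx lexlt_irr andbF.
by rewrite IH lexlt_irr andbF.
Qed.

Lemma prec_trans k s t u : prec X k s t -> prec X k t u -> prec X k s u.
Proof.
elim: k s t u => [|k IH] s t u //=; case: ifP => _.
  move=> /orP[st|/andP[/eqP-> st]] /orP[tu|/andP[/eqP<- tu]].
  - by rewrite (lt_trans st tu).
  - by rewrite st.
  - by rewrite tu.
  - by rewrite eqxx (lexlt_trans st tu) orbT.
move=> /orP[st|/andP[/eqP-> st]] /orP[tu|/andP[/eqP<- tu]].
- by rewrite (IH _ _ _ st tu).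
- by rewrite st.
- by rewrite tu.
- by rewrite eqxx (lexlt_trans st tu) orbT.
Qed.

Lemma precS k s t : prec X k.+2 s t =
  prec X k.+1 (max_facet (prec X k.+1) s) (max_facet (prec X k.+1) t) ||
  (max_facet (prec X k.+1) s == max_facet (prec X k.+1) t) && lexlt s t.
Proof. by []. Qed.

Lemma prec_total k s t : (1 <= k)%N -> [|| prec X k s t, prec X k t s | s == t].
Proof.
case: k => // k _; elim: k s t => [|k IH] s t.
  rewrite /=; case: (ltgtP (diam X s) (diam X t)) => //= _.
  by case/or3P: (lexlt_total s t) => ->; rewrite ?orbT.
rewrite !precS.
case/or3P: (IH (max_facet (prec X k.+1) s) (max_facet (prec X k.+1) t)) => [->|->|/eqP->]; rewrite ?orbT // eqxx /=.
by case/or3P: (lexlt_total s t) => ->; rewrite ?orbT.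
Qed.
End Prec.


Section Gen.
Variables (T : finType) (lt : rel T).
Hypothesis irr : forall x, lt x x = false.
Hypothesis trans : forall x y z, lt x y -> lt y z -> lt x z.

Lemma cnt_lt (Q : pred T) f g : Q f -> lt f g ->
  (#|[set h | Q h & lt h f]| < #|[set h | Q h & lt h g]|)%N.
Proof.
move=> Qf fg; apply: proper_card; apply/properP; split.
  apply/subsetP => h; rewrite !inE => /andP[-> hf] /=; exact: trans hf fg.
by exists f; rewrite !inE ?Qf ?fg ?irr.
Qed.

Lemma max_exists (P : pred T) x0 :
  (forall x y, P x -> P y -> [|| lt x y, lt y x | x == y]) -> P x0 ->
  exists f, P f && [forall g, (P g && (g != f)) ==> lt g f].
Proof.
move=> tot P0.
case: (arg_maxnP (fun f => #|[set g | P g & lt g f]|) P0) => f Pf fmax.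
exists f; rewrite Pf /=; apply/forallP => g; apply/implyP => /andP[Pg gf].
case/or3P: (tot f g Pf Pg) => // [fg|/eqP fg]; last by rewrite fg eqxx in gf.
by move: (fmax g Pg) => /=; rewrite leqNgt (cnt_lt Pf fg).
Qed.
End Gen.

Section Prec2.
Variables (R : realType) (d n : nat) (X : 'I_n -> 'rV[R]_d).

Lemma max_facet_spec k (t : {set 'I_n}) : (1 <= k)%N -> (0 < #|t|)%N ->
  is_facet (max_facet (prec X k) t) t /\
  forall g, is_facet g t -> g != max_facet (prec X k) t -> prec X k g (max_facet (prec X k) t).
Proof.
move=> k1 t0.
have [x xt] : exists x, x \in t by apply/set0Pn; rewrite -card_gt0.
have Fx : is_facet (t :\ x) t.
  by rewrite /is_facet subsetDl (cardsD1 x t) xt add1n /=.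
have [f Hf] := max_exists (@prec_irr' R d n X k) (@prec_trans R d n X k)
   (P := fun f => is_facet f t) (fun a b _ _ => prec_total X a b k1) Fx.
rewrite /max_facet; case: pickP => [g /andP[Fg /forallP Hg]|/(_ f) ]; last by rewrite Hf.
split => // h Fh hg; by move: (Hg h); rewrite Fh hg.
Qed.

Lemma facet_le_max k (t s : {set 'I_n}) : (1 <= k)%N -> (0 < #|t|)%N -> is_facet s t ->
  s = max_facet (prec X k) t \/ prec X k s (max_facet (prec X k) t).
Proof.
move=> k1 t0 Fs; have [_ H] := max_facet_spec k1 t0.
case: (eqVneq s (max_facet (prec X k) t)) => [->|ne]; [by left|right; exact: H].
Qed.
End Prec2.


Section Mat.
Variables (R : realType) (F : fieldType) (d n : nat) (X : 'I_n -> 'rV[R]_d).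
Implicit Types (S : {set {set 'I_n}}) (u t : {set 'I_n}).

Definition PP m (S : {set {set 'I_n}}) := bnd F (skel_plus X m S) m.

Lemma skel_low m S u : S \subset DELk X m -> (#|u| <= m)%N -> skel_plus X m S u = DEL X u.
Proof.
move=> /subsetP sS um; rewrite /skel_plus um andbT.
case: (boolP (u \in S)) => [/sS|]; last by rewrite orbF.
by rewrite inE => /andP[_ /eqP E]; rewrite E ltnn in um.
Qed.

Lemma skel_top m S u : S \subset DELk X m -> #|u| = m.+1 -> skel_plus X m S u = (u \in S).
Proof. by move=> _ E; rewrite /skel_plus E ltnn andbF. Qed.

Lemma PP_entry m S i j : S \subset DELk X m ->
  PP m S i j = if enum_val i \in S then PP m (DELk X m) i j else 0.
Proof.
move=> sS; have sD : DELk X m \subset DELk X m by [].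
rewrite /PP /bnd !mxE.
case: (eqVneq #|enum_val i| m.+1) => [Et|Et]; last by rewrite !andbF; case: ifP.
case: (eqVneq #|enum_val i| #|enum_val j|.+1) => [Es|Es]; last by rewrite !andbF; case: ifP.
have Ej : (#|enum_val j| <= m)%N by move: Es; rewrite Et => -[->].
rewrite !(skel_top sS Et) !(skel_top sD Et) !(skel_low sS Ej) !(skel_low sD Ej).
case: (boolP (enum_val i \in S)) => iS /=; last by [].
by rewrite (subsetP sS _ iS).
Qed.

Lemma PP_row m S i : S \subset DELk X m ->
  row i (PP m S) = if enum_val i \in S then row i (PP m (DELk X m)) else 0.
Proof.
move=> sS; apply/matrixP => a b; rewrite mxE (PP_entry _ _ sS).
by case: ifP => _; rewrite [RHS]mxE.
Qed.

Lemma bnd_high m S : S \subset DELk X m -> bnd F (skel_plus X m S) m.+1 = 0.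
Proof.
move=> /subsetP sS; apply/matrixP => a b; rewrite !mxE /=.
case: ifP => // /and5P[K1 _ /eqP Et _ _]; exfalso; move: K1.
rewrite /skel_plus Et ltnNge leqnSn /= andbF /= => H.
move: (sS _ H); rewrite inE Et => /andP[_].
by rewrite eqSS (gtn_eqF (ltnSn _)).
Qed.

Lemma bnd_low k S S' : S \subset DELk X k.+1 -> S' \subset DELk X k.+1 ->
  bnd F (skel_plus X k.+1 S) k = bnd F (skel_plus X k.+1 S') k.
Proof.
move=> sS sS'; apply/matrixP => a b; rewrite !mxE /=.
set ta := enum_val a; set tb := enum_val b.
have E : forall T2 : {set {set 'I_n}}, T2 \subset DELk X k.+1 ->
  [&& skel_plus X k.+1 T2 ta, skel_plus X k.+1 T2 tb, #|ta| == k.+1, tb \subset ta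
      & #|ta| == #|tb|.+1] =
  [&& DEL X ta, DEL X tb, #|ta| == k.+1, tb \subset ta & #|ta| == #|tb|.+1].
  move=> T2 sT2.
  case: (eqVneq #|ta| k.+1) => [Et|ne]; last by rewrite !andbF.
  have Ea : (#|ta| <= k.+1)%N by rewrite Et.
  rewrite (skel_low sT2 Ea).
  case: (eqVneq #|ta| #|tb|.+1) => [Es|ne]; last by rewrite !andbF.
  have Eb : (#|tb| <= k.+1)%N by move: Es; rewrite Et => -[<-].
  by rewrite (skel_low sT2 Eb).
by rewrite (E _ sS) (E _ sS').
Qed.

Lemma cells_low k S : S \subset DELk X k.+1 ->
  [set t | skel_plus X k.+1 S t & #|t| == k.+1] = [set t | DEL X t & #|t| == k.+1].
Proof.
move=> sS; apply/setP => t; rewrite !inE.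
case: (eqVneq #|t| k.+1) => [E|]; last by rewrite !andbF.
by rewrite (skel_low sS) ?E.
Qed.

Lemma cells_top m S : S \subset DELk X m ->
  [set t | skel_plus X m S t & #|t| == m.+1] = S.
Proof.
move=> /subsetP sS; apply/setP => t; rewrite !inE.
case: (eqVneq #|t| m.+1) => [E|NE]; first by rewrite (skel_top _ E) ?andbT //; apply/subsetP.
rewrite andbF; apply/esym/negbTE; apply: contra NE => /sS; by rewrite inE => /andP[].
Qed.

Lemma sa_rank k S : spanning_acycle F X k.+1 S -> (#|S| <= \rank (PP k.+1 S))%N.
Proof.
case=> sS [H _]; move: H; rewrite /rbetti (cells_top sS) (bnd_high sS) mxrank0 subn0.
by move/eqP; rewrite subn_eq0.
Qed.

Lemma sa_transfer k S S' : spanning_acycle F X k.+1 S -> S' \subset DELk X k.+1 ->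
  (#|S'| <= \rank (PP k.+1 S'))%N -> (\rank (PP k.+1 S) <= \rank (PP k.+1 S'))%N ->
  spanning_acycle F X k.+1 S'.
Proof.
case=> sS [_ H] sS' c1 c2; split => //; split.
  by rewrite /rbetti (cells_top sS') (bnd_high sS') mxrank0 subn0; apply/eqP; rewrite subn_eq0.
move: H; rewrite /rbetti /= (cells_low sS) (cells_low sS') (bnd_low sS sS').
move/eqP; rewrite subn_eq0 => H; apply/eqP; rewrite subn_eq0.
exact: leq_trans H c2.
Qed.
End Mat.


Section Main.
Variables (R : realType) (F : fieldType) (d n : nat) (X : 'I_n -> 'rV[R]_d).
Implicit Types (S : {set {set 'I_n}}) (u t : {set 'I_n}).

Lemma PP_row_sub m S S' l : S \subset DELk X m -> S' \subset DELk X m ->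
  (enum_val l \in S -> enum_val l \in S') ->
  (row l (PP F X m S) <= PP F X m S')%MS.
Proof.
move=> sS sS' H; rewrite (PP_row F l sS); case: ifP => [lS|]; last by rewrite sub0mx.
have := PP_row F l sS'; rewrite (H lS) => <-; exact: row_sub.
Qed.

Lemma PP_sub m S S' : S \subset DELk X m -> S' \subset DELk X m -> S \subset S' ->
  (PP F X m S <= PP F X m S')%MS.
Proof.
move=> sS sS' /subsetP sub; apply/row_subP => l; exact: PP_row_sub (sub _).
Qed.

Definition wt k (s : {set 'I_n}) : R :=
  (#|[set h | predT h & prec X k.+1 h s]|%:R - (#|{: {set 'I_n}}|.+1)%:R).

Lemma wt_inc k : strictly_increasing X k.+1 (wt k).
Proof.
move=> s t _ _ st; rewrite /wt ltrD2r ltr_nat.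
exact: (cnt_lt (@prec_irr' R d n X k.+1) (@prec_trans R d n X k.+1) (Q := predT)).
Qed.

Lemma wt_neg k s : wt k s < 0.
Proof.
rewrite /wt subr_lt0 ltr_nat ltnS; exact: max_card.
Qed.

Lemma precS1 k s t : (1 <= k)%N -> prec X k.+1 s t =
  prec X k (max_facet (prec X k) s) (max_facet (prec X k) t) ||
  (max_facet (prec X k) s == max_facet (prec X k) t) && lexlt s t.
Proof. by case: k. Qed.
End Main.


End Aux.
Import Aux.

Theorem lemma6 (R : realType) (F : fieldType) (d n : nat) (X : 'I_n -> 'rV[R]_d)
  (k : nat) (S : {set {set 'I_n}}) (sigma : {set 'I_n}) :
  injective X -> general_position X ->
  (1 <= k)%N -> (k <= d.-1)%N ->
  sigma \in DELk X k ->
  is_MSA F X k.+1 S ->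
  (forall tau, tau \in S -> sigma \subset tau -> prec X k sigma (max_bd X k tau)) ->
  sigma \in USC X k.
Proof.
move=> _ _ k1 _ sig_in [saS MSA] Hyp.
rewrite inE sig_in /=; apply/forallP => t0; apply/implyP => t0D; apply/implyP => sigt0.
case: (boolP (prec X k sigma (max_bd X k t0))) => // Hn; exfalso.
move: (t0D) (sig_in); rewrite !inE => /andP[Dt0 /eqP ct0] /andP[Dsig /eqP csig].
have Fsig : is_facet sigma t0 by rewrite /is_facet sigt0 ct0 csig /=.
have mt0 : max_bd X k t0 = sigma.
  have := facet_le_max X k1 _ Fsig; rewrite ct0 => /(_ isT) [E|E]; first by rewrite /max_bd -E.
  by rewrite /max_bd E in Hn.
have t0S : t0 \notin S.
  by apply/negP => /Hyp /(_ sigt0); rewrite (negbTE Hn).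
have sS := saS.1.
have wi := @wt_inc R d n X k. have wn := @wt_neg R d n X k.
set S1 := t0 |: S.
have sS1 : S1 \subset DELk X k.+1 by rewrite subUset sub1set t0D sS.
have PS1 : (PP F X k.+1 S <= PP F X k.+1 S1)%MS.
  by apply: PP_sub => //; apply: subsetUr.
have rS := sa_rank saS.
case: (leqP #|S1| (\rank (PP F X k.+1 S1))) => [c1|c1].
  have sa1 : spanning_acycle F X k.+1 S1.
    by apply: sa_transfer saS sS1 c1 (mxrankS PS1).
  have ne : S1 != S by apply: contraNneq t0S => <-; rewrite setU11.
  move: (MSA _ wi _ sa1 ne); rewrite /S1 big_setU1 //= -ltrBlDr subrr.
  by rewrite ltNge (ltW (wn _)).
have cS1 : #|S1| = #|S|.+1 by rewrite /S1 cardsU1 t0S.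
have PS1' : (PP F X k.+1 S1 <= PP F X k.+1 S)%MS.
  rewrite -(mxrank_leqif_sup PS1).2 eqn_leq (mxrankS PS1) /=.
  by apply: leq_trans rS; rewrite -ltnS -cS1.
set i0 := enum_rank t0; set j0 := enum_rank sigma.
have [D eD] : exists D, row i0 (PP F X k.+1 S1) = D *m PP F X k.+1 S.
  by apply/submxP; apply: submx_trans PS1'; apply: row_sub.
have nz : (row i0 (PP F X k.+1 S1)) 0 j0 != 0.
  rewrite mxE /PP /bnd mxE /= /i0 /j0 !enum_rankK.
  rewrite /skel_plus /S1 setU11 orbT ifT ?signr_eq0 //.
  apply/and5P; split => //.
  - by apply/orP; left; apply/andP; split => //; exact: (eq_leq csig).
  - by apply/eqP; exact: ct0.
  - by apply/eqP; exact: (etrans ct0 (congr1 succn (esym csig))).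
have [j /andP[Dj Pj]] : exists j, (D 0 j != 0) && (PP F X k.+1 S j j0 != 0).
  apply/existsP; apply: contraTT nz => /existsPn H.
  rewrite negbK eD mxE; apply/eqP/big1 => j _; move: (H j); rewrite negb_and !negbK.
  by case/orP => /eqP ->; rewrite ?mul0r ?mulr0.
set tau := enum_val j.
have [tauS Sub] : tau \in S /\ sigma \subset tau.
  move: Pj; rewrite /PP /bnd mxE /=; case: ifP => [/and5P[K1 _ E Sub _] _|]; last by rewrite eqxx.
  split; last by move: Sub; rewrite /j0 enum_rankK.
  by move: K1; rewrite (skel_top sS (eqP E)).
set S' := t0 |: (S :\ tau).
have t0S' : t0 \notin S :\ tau by rewrite in_setD1 (negbTE t0S) andbF.
have sS' : S' \subset DELk X k.+1.
  by rewrite subUset sub1set t0D (subset_trans (subsetDl S [set tau]) sS).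
have inS' l : l != j -> enum_val l \in S -> enum_val l \in S'.
  move=> lj lS; rewrite in_setU1 in_setD1 lS andbT; apply/orP; right.
  by apply: contra lj => /eqP/enum_val_inj ->.
have PS' : (PP F X k.+1 S <= PP F X k.+1 S')%MS.
  apply/row_subP => l; case: (eqVneq l j) => [->|lj]; last exact: PP_row_sub sS sS' (inS' l lj).
  have H : (D 0 j *: row j (PP F X k.+1 S) <= PP F X k.+1 S')%MS.
    have -> : D 0 j *: row j (PP F X k.+1 S) = row i0 (PP F X k.+1 S1) -
       \sum_(l | l != j) D 0 l *: row l (PP F X k.+1 S).
      by rewrite eD mulmx_sum_row (bigD1 j) //= addrK.
    apply: addmx_sub.
      apply: PP_row_sub sS1 sS' _ => _; by rewrite /i0 enum_rankK setU11.
    rewrite -scaleN1r; apply: scalemx_sub; apply: summx_sub => l' l'j.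
    by apply: scalemx_sub; apply: PP_row_sub sS sS' (inS' l' l'j).
  by have := scalemx_sub (D 0 j)^-1 H; rewrite scalerA mulVf // scale1r.
have cS' : #|S'| = #|S| by rewrite /S' cardsU1 t0S' (cardsD1 tau S) tauS.
have saS' : spanning_acycle F X k.+1 S'.
  apply: sa_transfer saS sS' _ (mxrankS PS').
  by rewrite cS'; apply: leq_trans rS (mxrankS PS').
have ne : S' != S by apply: contraNneq t0S => <-; rewrite setU11.
have lt0 : wt X k t0 < wt X k tau.
  apply: wi => //; first by apply: (subsetP sS).
  rewrite precS1 //; apply/orP; left.
  by have := Hyp _ tauS Sub; rewrite -mt0.
move: (MSA _ wi _ saS' ne); rewrite /S' big_setU1 //= (big_setD1 _ tauS) /= ltrD2r.
by rewrite ltNge (ltW lt0).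
Qed.
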